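(* In the slot formulation of the weighted balls-into-bins process, for every $0<a<\lambda/2$ and every $t\ge0$, $$\mathbb E\left[\Phi(x^s(t+1))-\Phi(x^s(t))\,\middle|\,x^s(t)\right]\le\sum_{i=1}^N\left(p_i\left(a+Sa^2\right)-\left(\frac aN-S\frac{a^2}{N^2}\right)\right)e^{a x^s_i(t)}.$$
   Context: Weighted balls into weighted bins: $n$ bins with positive integer weights $N_1,\dots,N_n$, $N=\sum_iN_i$; $\mathcal D$ on $[n]$ is $(\alpha,\beta)$-biased, i.e. $\frac{N_i}{\alpha N}\le\Pr_{\mathcal D}[i]\le\frac{\beta N_i}{N}$. Ball weights $w(t)$ are i.i.d. from $\mathcal W$ on $[0,\infty)$ with $\mathbb E[\mathcal W]=1$ and $M(z)=\mathbb E[e^{z\mathcal W}]$ finite at $z=\lambda$ for some $\lambda>0$; $S\ge1$ is a constant with $M''(z)\le2S$ for all $|z|<\lambda/2$. Each round two bins are sampled independently from $\mathcal D$ and the ball goes to the sampled bin with smaller value $v_i(t-1)=w_i(t-1)/N_i$ ($w_i(t)$ = total weight in bin $i$ after round $t$). Slot formulation: bin $i$ consists of $N_i$ unit slots, each with value $v_i(t)$; the normalized slot vector $x^s(t)\in\mathbb R^N$ has, for each slot of bin $i$, the entry $v_i(t)-\frac1N\sum_{t'\le t}w(t')$, and its entries are indexed in nonincreasing order $x^s_1(t)\ge\dots\ge x^s_N(t)$. Equivalently, each round two slots are drawn independently (a slot of bin $i$ with probability $\Pr_{\mathcal D}[i]/N_i$), the one later in the sorted order is selected, and the ball's weight is spread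 evenly over the slots of its bin. $p_i=p_i(t)$ is the conditional probability, given $x^s(t)$, that the selected slot in round $t+1$ is the $i$-th slot in the sorted order. For $a>0$ and $y\in\mathbb R^N$: $\Phi(y)=\sum_je^{ay_j}$, $\Psi(y)=\sum_je^{-ay_j}$, $\Gamma(y)=\Phi(y)+\Psi(y)$. *)

(* Defs.v *)
From HB Require Import structures.
From mathcomp Require Import all_boot all_order all_algebra.
From mathcomp Require Import all_classical all_reals all_analysis.
Set Implicit Arguments. Unset Strict Implicit. Unset Printing Implicit Defensive.
Import Order.TTheory GRing.Theory Num.Theory.
Import numFieldNormedType.Exports.
Local Open Scope ring_scope.

Definition totalN (n : nat) (Nw : 'I_n -> nat) : nat := \sum_(i < n) Nw i.

(* slots: bin i consists of N_i unit slots *)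
Definition slot (n : nat) (Nw : 'I_n -> nat) := {i : 'I_n & 'I_(Nw i)}.

Definition slot_val (R : realType) (n : nat) (Nw : 'I_n -> nat)
  (w : 'I_n -> R) (i : 'I_n) : R :=
  w i / (Nw i)%:R - (\sum_(j < n) w j) / (totalN Nw)%:R.

Definition add_load (R : realType) (n : nat) (w : 'I_n -> R) (b : 'I_n) (ww : R)
  : 'I_n -> R := fun j => if j == b then w j + ww else w j.

Definition Phi (R : realType) (m : nat) (a : R) (y : 'I_m -> R) : R :=
  \sum_(j < m) expR (a * y j).

(* probability that a single draw picks slot s : Pr_D[i] / N_i, i the bin of s *)
Definition qslot (R : realType) (n : nat) (Nw : 'I_n -> nat) (D : 'I_n -> R)
  (s : slot Nw) : R := D (tag s) / (Nw (tag s))%:R.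

Definition later (m : nat) (k1 k2 : 'I_m) : 'I_m := if (k1 <= k2)%N then k2 else k1.

(* p_k: probability that the selected slot is the k-th in the sorted order pi *)
Definition psel (R : realType) (n : nat) (Nw : 'I_n -> nat) (D : 'I_n -> R)
  (pi : 'I_(totalN Nw) -> slot Nw) (k : 'I_(totalN Nw)) : R :=
  \sum_(k1 < totalN Nw) \sum_(k2 < totalN Nw)
     (if later k1 k2 == k then qslot D (pi k1) * qslot D (pi k2) else 0).

Definition mgf (R : realType) (P : probability R R) (z : R) : R :=
  fine (\int[P]_x (expR (z * x))%:E)%E.

Definition xs (R : realType) (n : nat) (Nw : 'I_n -> nat) (w : 'I_n -> R)
  (pi : 'I_(totalN Nw) -> slot Nw) : 'I_(totalN Nw) -> R :=
  fun k => slot_val Nw w (tag (pi k)).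

(* E[ Phi(x^s(t+1)) - Phi(x^s(t)) | state ] : two slots drawn independently,
   the later one (in the sorted order pi) is selected, a ball of weight
   W ~ P is put into its bin. *)
Arguments xs {R n} Nw w pi.
Arguments psel {R n} Nw D pi k.

Definition exp_change (R : realType) (n : nat) (Nw : 'I_n -> nat) (D : 'I_n -> R)
  (P : probability R R) (a : R) (w : 'I_n -> R)
  (pi : 'I_(totalN Nw) -> slot Nw) : \bar R :=
  (\sum_(k1 < totalN Nw) \sum_(k2 < totalN Nw)
     (qslot D (pi k1) * qslot D (pi k2))%:E *
     \int[P]_ww (Phi a (xs Nw (add_load w (tag (pi (later k1 k2))) ww) pi)
                 - Phi a (xs Nw w pi))%:E)%E.

Arguments exp_change {R n} Nw D P a w pi.

(* Main.v *)
Require Import Defs.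
From HB Require Import structures.
From mathcomp Require Import all_boot all_order all_algebra.
From mathcomp Require Import all_classical all_reals all_analysis.
From mathcomp Require Import measurable_realfun.
From mathcomp Require Import ring lra.
Import Order.TTheory GRing.Theory Num.Theory.
Import numFieldNormedType.Exports.
Local Open Scope ring_scope.
Set Implicit Arguments. Unset Strict Implicit. Unset Printing Implicit Defensive.

Section Helpers.
Local Open Scope classical_set_scope.
Definition Bp (R : realType) : set R := `[0%R, +oo[.
Arguments Bp : clear implicits.

Lemma mBp (R : realType) : measurable (Bp R).
Proof. exact: measurable_itv. Qed.

Lemma Bp_null (R : realType) (P : probability R R) :
  P [set x : R | x < 0] = 0%E -> P (~` Bp R) = 0%E.
Proof.
move=> h; rewrite -h; congr (P _).
apply/seteqP; split => x /=; rewrite /Bp /= in_itv /= andbT.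
  by rewrite ltNge => /negP.
by rewrite ltNge => /negP.
Qed.

Lemma integral_Bp (R : realType) (P : probability R R) (f : R -> \bar R) :
  P [set x : R | x < 0] = 0%E -> measurable_fun [set: R] f ->
  (\int[P]_x f x = \int[P]_(x in Bp R) f x)%E.
Proof.
move=> h mf.
have mC : measurable (~` Bp R) by apply: measurableC; exact: measurable_itv.
rewrite -(setUv (Bp R)) integral_setU //; last first.
all: try (by rewrite disj_set2E setICr).
all: try (by rewrite setUv).
all: try exact: measurable_itv.
rewrite [X in (_ + X)%E]null_set_integral ?adde0 //.
all: try exact: measurable_funS mf.
all: try exact: Bp_null.
Qed.
Lemma is_derive_mulr (R : realType) (y z : R) :
  is_derive z 1 (fun t : R => t * y) y.
Proof.
have H : is_derive z 1 (y *: (id : R -> R)) (y *: (1:R)) by exact: is_deriveZ.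
rewrite [X in is_derive _ _ _ X]/GRing.scale /= mulr1 in H.
have -> : (fun t : R => t * y) = y *: (id : R -> R).
  by apply/funext => t; rewrite /= mulrC.
exact: H.
Qed.
Lemma is_derive_expRMl (R : realType) (y z : R) :
  is_derive z 1 (fun t => expR (t * y)) (expR (z * y) * y).
Proof.
exact: (@is_derive1_comp R expR (fun t => t * y) z (expR (z*y)) y (is_derive_expR _) (is_derive_mulr y z)).
Qed.

Definition Kc (R : realType) (c : R) : R := 1 + c^-1 + 2 / c ^+ 2.

Lemma Kc_ge1 (R : realType) (c : R) : 0 < c -> 1 <= Kc c.
Proof.
move=> c0; rewrite /Kc -addrA lerDl.
apply: addr_ge0; first by rewrite invr_ge0 ltW.
by apply: divr_ge0 => //; rewrite exprn_ge0 // ltW.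
Qed.

Lemma bound_pow (R : realType) (c y : R) (k : nat) :
  0 < c -> 0 <= y -> (k <= 2)%N -> y ^+ k <= Kc c * expR (c * y).
Proof.
move=> c0 y0 k2.
have cy0 : 0 <= c * y by rewrite mulr_ge0 // ltW.
have e1 : 1 <= expR (c * y) by rewrite -expR0 ler_expR.
have Ki : 0 <= c^-1 by rewrite invr_ge0 ltW.
have K2 : 0 <= 2 / c ^+ 2 by rewrite divr_ge0 // exprn_ge0 // ltW.
case: k k2 => [|[|[|//]]] _.
- rewrite expr0; apply: (le_trans e1); rewrite ler_peMl ?expR_ge0 //; exact: Kc_ge1.
- rewrite expr1.
  have h1 : y <= c^-1 * expR (c * y).
    rewrite -(ler_pM2l c0) mulrA mulfV ?gt_eqF // mul1r.
    by apply: le_trans (expR_ge1Dx _); rewrite lerDr.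
  apply: (le_trans h1); apply: ler_wpM2r; first exact: expR_ge0.
  rewrite /Kc -addrA; apply: ler_wpDl => //; by rewrite lerDl.
- have h2 : y ^+ 2 <= 2 / c ^+ 2 * expR (c * y).
    have := expR_ge1Dxn 1 cy0.
    rewrite (_ : (2`!)%:R = 2 :> R) //.
    move=> H.
    have H' : (c * y) ^+ 2 / 2 <= expR (c * y) by apply: le_trans H; rewrite lerDr.
    rewrite exprMn in H'.
    have -> : y ^+ 2 = (2 / c ^+ 2) * (c ^+ 2 * y ^+ 2 / 2).
      by field; rewrite gt_eqF.
    exact: ler_wpM2l.
  apply: (le_trans h2); apply: ler_wpM2r; first exact: expR_ge0.
  rewrite /Kc; apply: ler_wpDl => //; apply: addr_ge0 => //.
Qed.

Lemma mfun_pe (R : realType) (D : set R) (k : nat) (z : R) :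
  measurable_fun D (fun y : R => y ^+ k * expR (z * y)).
Proof.
apply: measurable_funM; first exact: exprn_measurable.
apply: measurableT_comp => //.
Qed.

Lemma boundG (R : realType) (lam z y : R) (k : nat) :
  0 < lam -> z <= lam / 2 -> 0 <= y -> (k <= 2)%N ->
  `|y ^+ k * expR (z * y)| <= Kc (lam / 2) * expR (lam * y).
Proof.
move=> l0 zc y0 k2.
set c := lam / 2.
have c0 : 0 < c by rewrite divr_gt0.
rewrite ger0_norm; last by rewrite mulr_ge0 ?exprn_ge0 ?expR_ge0.
have -> : lam * y = c * y + c * y by rewrite -mulrDl /c -splitr.
rewrite expRD mulrA; apply: ler_pM; rewrite ?exprn_ge0 ?expR_ge0 //.
+ exact: bound_pow.
+ by rewrite ler_expR ler_wpM2r.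
Qed.

Lemma intG (R : realType) (P : probability R R) (lam : R) (K : R) :
  P.-integrable setT (fun x => (expR (lam * x))%:E) ->
  P.-integrable (Bp R) (EFin \o (fun y => K * expR (lam * y))).
Proof.
move=> il.
apply: (@integrableS _ _ _ _ setT) => //.
  exact: mBp.
have -> : (EFin \o (fun y => K * expR (lam * y))) = (fun y => (K%:E * (expR (lam * y))%:E)%E) by apply/funext => y; rewrite /= EFinM.
exact: integrableZl.
Qed.

Lemma intF (R : realType) (P : probability R R) (lam z : R) (k : nat) :
  0 < lam -> P.-integrable setT (fun x => (expR (lam * x))%:E) ->
  z <= lam / 2 -> (k <= 2)%N ->
  P.-integrable (Bp R) (EFin \o (fun y => y ^+ k * expR (z * y))).
Proof.
move=> l0 il zc k2.
have c0 : 0 < lam / 2 by rewrite divr_gt0.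
have H := @le_integrable _ _ _ P _ (@mBp R) (EFin \o (fun y => y ^+ k * expR (z * y))) (fun y => (Kc (lam/2) * expR (lam * y))%:E).
apply: H.
- by apply/measurable_EFinP; exact: mfun_pe.
- move=> y; rewrite /Bp /= in_itv /= andbT => y0.
  rewrite lee_fin [X in _ <= X]ger0_norm; first exact: boundG.
  by rewrite mulr_ge0 ?expR_ge0 // (le_trans ler01 (Kc_ge1 c0)).
- exact: (intG (Kc (lam/2)) il).
Qed.

Definition Fk (R : realType) (P : probability R R) (k : nat) (z : R) : R :=
  \int[P]_(y in Bp R) (y ^+ k * expR (z * y)).

Lemma dFk (R : realType) (P : probability R R) (lam z : R) (k : nat) :
  0 < lam -> P.-integrable setT (fun x => (expR (lam * x))%:E) ->
  (k <= 1)%N -> - (lam / 2) < z -> z < lam / 2 ->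
  derivable (Fk P k) z 1 /\ (Fk P k)^`() z = Fk P k.+1 z.
Proof.
move=> l0 il k1 zl zr.
set c := lam / 2.
have c0 : 0 < c by rewrite divr_gt0.
pose f := fun (x : R) (y : R) => y ^+ k * expR (x * y).
have Iz : `]- c, c[%classic z by rewrite /= in_itv /= zl zr.
have intf : forall x, `]- c, c[%classic x -> P.-integrable (Bp R) (EFin \o f x).
  move=> x; rewrite /= in_itv /= => /andP[_ xc].
  have xc' : x <= lam / 2 := ltW xc.
  have k2 : (k <= 2)%N by apply: leq_trans k1 _.
  exact: (@intF R P lam x k l0 il xc' k2).
have dd : forall x y : R, is_derive x 1 (f^~ y) (y ^+ k.+1 * expR (x * y)).
  move=> x y.
  have H := @is_deriveZ _ _ _ (fun t : R => expR (t * y)) (y ^+ k) x 1 _ (is_derive_expRMl y x).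
  have -> : (f^~ y) = (y ^+ k) \*: (fun t : R => expR (t * y)) by apply/funext => t.
  apply: (is_derive_eq H).
  change (y ^+ k * (expR (x * y) * y) = y ^+ k.+1 * expR (x * y)); rewrite exprSr; ring.
have derf1 : forall x y : R, `]- c, c[%classic x -> Bp R y -> derivable (f^~ y) x 1.
  by move=> x y _ _; have [] := dd x y.
have d1 : forall x y : R, partial1of2 f x y = y ^+ k.+1 * expR (x * y).
  by move=> x y; rewrite partial1of2E; apply: derive_val.
have Gge0 : forall y : R, 0 <= Kc c * expR (lam * y).
  by move=> y; rewrite mulr_ge0 ?expR_ge0 // (le_trans ler01 (Kc_ge1 c0)).
have Gub : forall x y : R, `]- c, c[%classic x -> Bp R y -> `|partial1of2 f x y| <= Kc c * expR (lam * y).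
  move=> x y; rewrite /= in_itv /= => /andP[_ xc]; rewrite /Bp /= in_itv /= andbT => y0.
  have xc' : x <= lam / 2 := ltW xc.
  have k2 : (k.+1 <= 2)%N by [].
  by rewrite d1; apply: boundG.
split.
- exact: (derivable_under_integral (@mBp R) Iz intf derf1 Gge0 (intG _ il) Gub).
- rewrite (differentiation_under_integral (@mBp R) Iz intf derf1 Gge0 (intG _ il) Gub).
  by apply: eq_Rintegral => y _; rewrite d1.
Qed.

Lemma FkE_T (R : realType) (P : probability R R) (k : nat) (z : R) :
  P [set x : R | x < 0] = 0%E ->
  Fk P k z = fine (\int[P]_x (x ^+ k * expR (z * x))%:E)%E.
Proof.
move=> h; rewrite /Fk /Rintegral (integral_Bp h) //.
by apply/measurable_EFinP; exact: mfun_pe.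
Qed.

Lemma mgfE (R : realType) (P : probability R R) :
  P [set x : R | x < 0] = 0%E -> mgf P = Fk P 0.
Proof.
move=> h; apply/funext => z; rewrite (FkE_T _ _ h) /mgf.
by congr fine; apply: eq_integral => y _; rewrite expr0 mul1r.
Qed.

Lemma Fk00 (R : realType) (P : probability R R) :
  P [set x : R | x < 0] = 0%E -> Fk P 0 0 = 1.
Proof.
move=> h; rewrite (FkE_T _ _ h).
rewrite (eq_integral (cst 1%:E)); last by move=> y _; rewrite expr0 mul0r expR0 mulr1.
rewrite integral_cst // mul1e; first [ by rewrite (probability_setT P) | by have -> := probability_setT P | by move: (probability_setT P); rewrite /= => -> ].
Qed.

Lemma Fk10 (R : realType) (P : probability R R) :
  P [set x : R | x < 0] = 0%E -> (\int[P]_x (x%:E) = 1)%E -> Fk P 1 0 = 1.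
Proof.
move=> h h1; rewrite (FkE_T _ _ h).
rewrite (eq_integral (fun x => x%:E)); last by move=> y _; rewrite expr1 mul0r expR0 mulr1.
by rewrite h1.
Qed.



Lemma is_derive_aff (R : realType) (f : R -> R) (x df c d : R) :
  is_derive x 1 f df -> is_derive x 1 (fun t => f t - c - d * t) (df - d).
Proof.
move=> H.
have H1 := is_deriveB H (is_derive_cst c x 1).
have H2 := is_deriveB H1 (is_derive_mulr d x).
have -> : (fun t => f t - c - d * t) = (f - cst c) - (fun t : R => t * d).
  by apply/funext => t /=; rewrite mulrC.
by apply: (is_derive_eq H2); rewrite subr0.
Qed.

Lemma is_derive_quad (R : realType) (f : R -> R) (x df c d e : R) :
  is_derive x 1 f df ->
  is_derive x 1 (fun t => f t - (c + d * t + e * t ^+ 2)) (df - (d + 2 * e * x)).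
Proof.
move=> H.
have Hx : is_derive x 1 (fun t : R => t * t) (x + x).
  have := is_deriveM (is_derive_id x (1:R)) (is_derive_id x (1:R)).
  move=> H3; apply: (is_derive_eq H3).
  by rewrite /GRing.scale /= mulr1.
have H4 := is_deriveZ e Hx.
have H5 := is_deriveB (is_derive_aff c d H) H4.
have -> : (fun t => f t - (c + d * t + e * t ^+ 2)) =
   ((fun t => f t - c - d * t) - e \*: (fun t : R => t * t)).
  apply/funext => t; change (f t - (c + d * t + e * t ^+ 2) = (f t - c - d * t) - e * (t * t)); ring.
apply: (is_derive_eq H5); change (df - d - e * (x + x) = df - (d + 2 * e * x)); ring.
Qed.

Lemma isd_der (R : realType) (f : R -> R) (x df : R) :
  is_derive x 1 f df -> derivable f x 1.
Proof. by move=> H; exact: (@ex_derive _ _ _ _ _ _ _ H). Qed.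

Lemma isd_val (R : realType) (f : R -> R) (x df : R) :
  is_derive x 1 f df -> f^`() x = df.
Proof. by move=> H; rewrite derive1E; exact: (@derive_val _ _ _ _ _ _ _ H). Qed.

Lemma taylor (R : realType) (P : probability R R) (lam S a z : R) :
  P [set x : R | x < 0] = 0%E ->
  (\int[P]_x (x%:E) = 1)%E ->
  0 < lam ->
  P.-integrable setT (fun x => (expR (lam * x))%:E) ->
  (forall z : R, `|z| < lam / 2 -> derive1n 2 (mgf P) z <= 2 * S) ->
  a < lam / 2 -> - a <= z -> z <= a ->
  Fk P 0 z <= 1 + z + S * z ^+ 2.
Proof.
move=> h0 h1 l0 il hd al za1 za2.
set c := lam / 2.
have c0 : 0 < c by rewrite divr_gt0.
have hI : forall x, - c < x -> x < c ->
   [/\ derivable (Fk P 0) x 1, (Fk P 0)^`() x = Fk P 1 x,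
       derivable (Fk P 1) x 1 & (Fk P 1)^`() x = Fk P 2 x].
  move=> x x1 x2.
  have [d0 e0] := @dFk R P lam x 0 l0 il (isT : (0 <= 1)%N) x1 x2.
  have [d1 e1] := @dFk R P lam x 1 l0 il (isT : (1 <= 1)%N) x1 x2.
  by split.
have isd1 : forall x, - c < x -> x < c -> is_derive x 1 (Fk P 1) (Fk P 2 x).
  move=> x x1 x2; have [_ _ d1 e1] := hI x x1 x2.
  have := derivableP d1; rewrite -derive1E e1; exact.
have isd0 : forall x, - c < x -> x < c -> is_derive x 1 (Fk P 0) (Fk P 1 x).
  move=> x x1 x2; have [d0 e0 _ _] := hI x x1 x2.
  have := derivableP d0; rewrite -derive1E e0; exact.
have F2le : forall x, - c < x -> x < c -> Fk P 2 x <= 2 * S.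
  move=> x x1 x2.
  have := hd x; rewrite ltr_norml x1 x2 => /(_ isT).
  rewrite (mgfE h0) /derive1n /= derive1E.
  rewrite (@near_eq_derive _ _ _ _ (Fk P 1)); last first.
    have xin : x \in `]- c, c[%R by rewrite in_itv /= x1 x2.
    move: (near_in_itvoo xin); apply: filterS => t; rewrite in_itv /= => /andP[t1 t2].
    by have [] := hI t t1 t2.
  by rewrite -derive1E; have [_ _ _ ->] := hI x x1 x2.
have ac : - c < - a by rewrite ltrN2.
have a0 : - a <= a by apply: le_trans za1 za2.
pose h := fun t => Fk P 1 t - 1 - 2 * S * t.
have ihd : forall x, - c < x -> x < c -> is_derive x 1 h (Fk P 2 x - 2 * S).
  by move=> x x1 x2; apply: is_derive_aff; exact: isd1.
have inI : forall x, - a <= x -> x <= a -> - c < x /\ x < c.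
  by move=> x x1 x2; split; [exact: lt_le_trans ac x1 | exact: le_lt_trans x2 al].
have hdec : forall x y, - a <= x -> x <= y -> y <= a -> h y <= h x.
  apply: ler0_derive1_nincr.
  - move=> x; rewrite in_itv /= => /andP[x1 x2].
    have [] := inI x (ltW x1) (ltW x2) => y1 y2.
    exact: isd_der (ihd x y1 y2).
  - move=> x; rewrite in_itv /= => /andP[x1 x2].
    have [y1 y2] : - c < x /\ x < c by apply: inI; lra.
    rewrite (isd_val (ihd x y1 y2)) subr_le0.
    exact: F2le.
  - apply: derivable_within_continuous => x; rewrite in_itv /= => /andP[x1 x2].
    have [y1 y2] := inI x x1 x2.
    exact: isd_der (ihd x y1 y2).
have h00 : h 0 = 0 by rewrite /h (Fk10 h0 h1) mulr0 !subrr.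
pose g := fun t => Fk P 0 t - (1 + 1 * t + S * t ^+ 2).
have igd : forall x, - c < x -> x < c -> is_derive x 1 g (h x).
  move=> x x1 x2; have := is_derive_quad 1 1 S (isd0 x x1 x2).
  by move=> H; apply: (is_derive_eq H); rewrite /h; ring.
have g00 : g 0 = 0 by rewrite /g (Fk00 h0); ring.
have gcont : forall u v, - a <= u -> v <= a -> {within `[u, v], continuous g}.
  move=> u v u1 v1; apply: derivable_within_continuous => x; rewrite in_itv /= => /andP[x1 x2].
  have [y1 y2] : - c < x /\ x < c by apply: inI; lra.
  exact: isd_der (igd x y1 y2).
suff : g z <= 0 by rewrite /g subr_le0 mul1r.
rewrite -g00.
have [z0|z0] := leP 0 z.
- have hder : forall x, x \in `]0, a[%R -> derivable g x 1.
    move=> x; rewrite in_itv /= => /andP[x1 x2].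
    have [y1 y2] : - c < x /\ x < c by apply: inI; lra.
    exact: isd_der (igd x y1 y2).
  have hdv : forall x, x \in `]0, a[%R -> g^`() x <= 0.
    move=> x; rewrite in_itv /= => /andP[x1 x2].
    have [y1 y2] : - c < x /\ x < c by apply: inI; lra.
    rewrite (isd_val (igd x y1 y2)) -h00.
    by apply: hdec; lra.
  have hc : {within `[0, a], continuous g} by apply: gcont; lra.
  exact: (@ler0_derive1_nincr R g 0 a hder hdv hc 0 z (lexx 0) z0 za2).
- have hder : forall x, x \in `]-a, 0[%R -> derivable g x 1.
    move=> x; rewrite in_itv /= => /andP[x1 x2].
    have [y1 y2] : - c < x /\ x < c by apply: inI; lra.
    exact: isd_der (igd x y1 y2).
  have hdv : forall x, x \in `]-a, 0[%R -> 0 <= g^`() x.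
    move=> x; rewrite in_itv /= => /andP[x1 x2].
    have [y1 y2] : - c < x /\ x < c by apply: inI; lra.
    rewrite (isd_val (igd x y1 y2)) -h00.
    by apply: hdec; lra.
  have hc : {within `[-a, 0], continuous g} by apply: gcont; lra.
  exact: (@ger0_derive1_ndecr R g (-a) 0 hder hdv hc z 0 za1 (ltW z0) (lexx 0)).
Qed.

Lemma PB1 (R : realType) (P : probability R R) :
  P [set x : R | x < 0] = 0%E -> (\int[P]_(y in Bp R) (cst 1%R y)%:E = 1)%E.
Proof.
move=> h; rewrite -integral_Bp //; last by apply/measurable_EFinP; exact: measurable_cst.
rewrite (eq_integral (cst 1%:E)) // integral_cst // mul1e.
first [ by rewrite (probability_setT P) | by have -> := probability_setT P | by move: (probability_setT P); rewrite /= => -> ].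
Qed.

Lemma int_one (R : realType) (P : probability R R) (lam d E : R) :
  P [set x : R | x < 0] = 0%E -> 0 < lam ->
  P.-integrable setT (fun x => (expR (lam * x))%:E) -> d <= lam / 2 ->
  (\int[P]_(y in Bp R) (E * (expR (d * y) - 1))%:E = (E * (Fk P 0 d - 1))%:E)%E.
Proof.
move=> h0 l0 il dl.
have i1 : P.-integrable (Bp R) (EFin \o (fun y => expR (d * y))).
  have := @intF R P lam d 0 l0 il dl isT.
  by apply: (@eq_integrable _ _ _ P _ (@mBp R)) => y _ /=; rewrite expr0 mul1r.
have i2 : P.-integrable (Bp R) (EFin \o cst (1:R)).
  apply: finite_measure_integrable_cst; exact: mBp.
rewrite (eq_integral (fun y => (E%:E * ((expR (d * y))%:E - (cst 1%R y)%:E))%E)); last first.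
  by move=> y _; rewrite /= EFinM EFinB.
have i3 := integrableB (@mBp R) i1 i2.
rewrite (integralZl (@mBp R) i3).
rewrite integralB_EFin //; last exact: mBp.
rewrite PB1 //.
have -> : (\int[P]_(x in Bp R) (expR (d * x))%:E)%E = (Fk P 0 d)%:E.
  rewrite /Fk /Rintegral fineK; last first.
    exact: (integrable_fin_num (@mBp R) (@intF R P lam d 0 l0 il dl isT)).
  by apply: eq_integral => y _; rewrite expr0 mul1r.
by rewrite -EFinB -EFinM.
Qed.

Lemma intchange (R : realType) (P : probability R R) (lam : R) (m : nat)
  (E d : 'I_m -> R) :
  P [set x : R | x < 0] = 0%E -> 0 < lam ->
  P.-integrable setT (fun x => (expR (lam * x))%:E) ->
  (forall k, d k <= lam / 2) ->
  (\int[P]_ww (\sum_(k < m) E k * (expR (d k * ww) - 1))%:E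
   = (\sum_(k < m) E k * (Fk P 0 (d k) - 1))%:E)%E.
Proof.
move=> h0 l0 il dl.
rewrite integral_Bp //; last first.
  apply/measurable_EFinP; apply: measurable_sum => k.
  apply: measurable_funM => //; apply: measurable_funB => //.
  by apply: measurableT_comp => //; apply: measurable_funM.
rewrite (eq_integral (fun ww => \sum_(k < m) (E k * (expR (d k * ww) - 1))%:E)%E); last first.
  by move=> y _; rewrite sumEFin.
rewrite integral_sum //; last first.
  move=> k.
  have i1 : P.-integrable (Bp R) (EFin \o (fun y => expR (d k * y))).
    have := @intF R P lam (d k) 0 l0 il (dl k) isT.
    by apply: (@eq_integrable _ _ _ P _ (@mBp R)) => y _ /=; rewrite expr0 mul1r.
  have i2 : P.-integrable (Bp R) (EFin \o cst (1:R)).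
    apply: finite_measure_integrable_cst; exact: mBp.
  have := integrableZl (@mBp R) (E k) (integrableB (@mBp R) i1 i2).
  by apply: (@eq_integrable _ _ _ P _ (@mBp R)) => y _ /=; rewrite EFinM EFinB.
  exact: mBp.
rewrite -sumEFin; apply: eq_bigr => k _.
exact: (@int_one R P lam (d k) (E k) h0 l0 il (dl k)).
Qed.

Lemma phi_diff (R : realType) (n : nat) (Nw : 'I_n -> nat) (w : 'I_n -> R)
  (pi : 'I_(totalN Nw) -> slot Nw) (a ww : R) (b : 'I_n) :
  Phi a (xs Nw (add_load w b ww) pi) - Phi a (xs Nw w pi) =
  \sum_(k < totalN Nw) expR (a * slot_val Nw w (tag (pi k))) *
    (expR (a * (((tag (pi k) == b)%:R / (Nw (tag (pi k)))%:R
                - 1 / (totalN Nw)%:R)) * ww) - 1).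
Proof.
rewrite /Phi -sumrB; apply: eq_bigr => k _.
have hs : \sum_(j < n) add_load w b ww j = \sum_(j < n) w j + ww.
  rewrite /add_load (bigD1 b) //= eqxx [in RHS](bigD1 b) //=.
  rewrite (eq_bigr (fun j => w j)); last by move=> j /negbTE ->.
  set s := \sum_(i < n | i != b) w i; ring.
rewrite /xs /slot_val hs [in RHS]mulrBr mulr1 -expRD.
congr (expR _ - _).
rewrite /add_load; case: eqP => [->|_] /=; rewrite !div1r;
  move: ((Nw _)%:R^-1) ((totalN Nw)%:R^-1) => p r; ring.
Qed.


End Helpers.


Lemma cnt (R : realType) (n : nat) (Nw : 'I_n -> nat)
  (pi : 'I_(totalN Nw) -> slot Nw) (G : 'I_n -> R) :
  bijective pi ->
  \sum_(k < totalN Nw) G (tag (pi k)) = \sum_(i < n) (Nw i)%:R * G i.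
Proof.
move=> bij.
rewrite -(reindex pi (P := xpredT) (F := fun s : slot Nw => G (tag s))); last exact: onW_bij.
rewrite /slot.
have := @sig_big_dep _ 0 +%R 'I_n (fun i => 'I_(Nw i)) xpredT (fun _ _ => true) (fun i _ => G i).
rewrite /= => <-.
apply: eq_bigr => i _; rewrite sumr_const card_ord mulr_natl.
done.
Qed.

Lemma alg (R : realType) (n : nat) (Nw : 'I_n -> nat) (D : 'I_n -> R)
  (pi : 'I_(totalN Nw) -> slot Nw) (a S : R) (E : 'I_n -> R) (F : R -> R) :
  (forall i : 'I_n, (0 < Nw i)%N) ->
  (forall i : 'I_n, 0 <= D i) -> \sum_(i < n) D i = 1 ->
  bijective pi -> 0 < a -> 0 <= S -> (forall i, 0 <= E i) ->
  (forall d, - a <= d -> d <= a -> F d - 1 <= d + S * d ^+ 2) ->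
  \sum_(k1 < totalN Nw) \sum_(k2 < totalN Nw)
    (qslot D (pi k1) * qslot D (pi k2)) *
    \sum_(k < totalN Nw) E (tag (pi k)) *
      (F (a * (((tag (pi k) == tag (pi (later k1 k2)))%:R / (Nw (tag (pi k)))%:R
                - 1 / (totalN Nw)%:R))) - 1)
  <= \sum_(i < totalN Nw)
      (psel Nw D pi i * (a + S * a ^+ 2)
       - (a / (totalN Nw)%:R - S * a ^+ 2 / ((totalN Nw)%:R ^+ 2)))
      * E (tag (pi i)).
Proof.
move=> Npos D0 D1 bij a0 S0 E0 Fb.
set N := totalN Nw.
set Nr : R := N%:R.
have q0 : forall s : slot Nw, 0 <= qslot D s.
  by move=> s; rewrite /qslot; apply: divr_ge0.
have sumq : \sum_(k < N) qslot D (pi k) = 1.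
  rewrite /qslot (@cnt R n Nw pi (fun j => D j / (Nw j)%:R)) //.
  rewrite -[RHS]D1; apply: eq_bigr => i _.
  by rewrite mulrC divfK // pnatr_eq0 -lt0n.
have cntb : forall b, \sum_(k < N) ((tag (pi k) == b)%:R : R) = (Nw b)%:R.
  move=> b; rewrite (@cnt R n Nw pi (fun j => ((j == b)%:R : R))) //.
  rewrite (bigD1 b) //= eqxx mulr1 big1 ?addr0 // => i /negbTE ->.
  by rewrite mulr0.
set K := a + S * a ^+ 2.
set C := - (a / Nr - S * a ^+ 2 / Nr ^+ 2).
have key : forall b, (0 < N)%N ->
   \sum_(k < N) E (tag (pi k)) *
      (F (a * (((tag (pi k) == b)%:R / (Nw (tag (pi k)))%:R - 1 / Nr))) - 1)
   <= K * E b + \sum_(k < N) C * E (tag (pi k)).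
  move=> b N0.
  have Nr1 : 1 <= Nr by rewrite ler1n.
  have vN0 : 0 <= 1 / Nr by rewrite divr_ge0.
  have vN1 : 1 / Nr <= 1 by rewrite ler_pdivrMr ?mul1r // (lt_le_trans ltr01).
  set d := fun k : 'I_N => a * (((tag (pi k) == b)%:R / (Nw (tag (pi k)))%:R - 1 / Nr)).
  apply: (@le_trans _ _ (\sum_(k < N) E (tag (pi k)) * (d k + S * d k ^+ 2))).
    apply: ler_sum => k _; apply: ler_wpM2l => //; apply: Fb.
    - have u0 : 0 <= (tag (pi k) == b)%:R / (Nw (tag (pi k)))%:R :> R by rewrite divr_ge0.
      rewrite /d; nra.
    - have u1 : (tag (pi k) == b)%:R / (Nw (tag (pi k)))%:R <= 1 :> R.
        rewrite ler_pdivrMr ?mul1r ?ltr0n //.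
        by case: (_ == _); rewrite ?ler1n ?ler0n.
      rewrite /d; nra.
  set u := (Nw b)%:R^-1 : R.
  set v := 1 / Nr.
  set Ab := a * (u - v) + S * (a * (u - v)) ^+ 2 - C.
  have tw : forall k, E (tag (pi k)) * (d k + S * d k ^+ 2) =
     C * E (tag (pi k)) + ((tag (pi k) == b)%:R : R) * (E b * Ab).
    move=> k; rewrite /d /Ab /C /v.
    case: eqP => [->|_] /=; rewrite /u !div1r -!exprVn; move: (Nr^-1) => r; [move: ((Nw b)%:R^-1) => p | rewrite mul0r]; ring.
  under eq_bigr do rewrite tw.
  rewrite big_split /= -mulr_suml cntb addrC lerD2r.
  rewrite mulrA mulrC mulrA; apply: ler_wpM2r => //.
  have Nb0 : 0 < (Nw b)%:R :> R by rewrite ltr0n.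
  have hu : (Nw b)%:R * u = 1 by rewrite mulfV // gt_eqF.
  have u1 : u <= 1 by rewrite /u invr_le1 ?ler1n // unitfE gt_eqF.
  have -> : Ab * (Nw b)%:R = a * ((Nw b)%:R * u) + S * a ^+ 2 * ((Nw b)%:R * u) * (u - 2 * v).
    rewrite /Ab /C /v !div1r -!exprVn; move: (Nr^-1) => r; clearbody u; ring.
  rewrite hu mulr1 /K lerD2l.
  have sa : 0 <= S * a ^+ 2 by rewrite mulr_ge0 // sqr_ge0.
  rewrite mulr1 -subr_ge0.
  have -> : S * a ^+ 2 - S * a ^+ 2 * (u - 2 * v) = S * a ^+ 2 * (1 - u + 2 * v) by ring.
  apply: mulr_ge0 => //; apply: addr_ge0; [by rewrite subr_ge0 | by apply: mulr_ge0].
apply: (@le_trans _ _ (\sum_(k1 < N) \sum_(k2 < N)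
   (qslot D (pi k1) * qslot D (pi k2)) *
   (K * E (tag (pi (later k1 k2))) + \sum_(k < N) C * E (tag (pi k))))).
  apply: ler_sum => k1 _; apply: ler_sum => k2 _.
  apply: ler_wpM2l; first by rewrite mulr_ge0.
  by apply: key; exact: (leq_ltn_trans (leq0n _) (ltn_ord k1)).
have F2 : \sum_(k1 < N) \sum_(k2 < N) qslot D (pi k1) * qslot D (pi k2) *
     (\sum_(k < N) C * E (tag (pi k))) = \sum_(k < N) C * E (tag (pi k)).
  transitivity (\sum_(k1 < N) qslot D (pi k1) * \sum_(k < N) C * E (tag (pi k))).
    apply: eq_bigr => k1 _.
    by rewrite -mulr_suml -mulr_sumr sumq mulr1.
  by rewrite -mulr_suml sumq mul1r.
have F1 : \sum_(k1 < N) \sum_(k2 < N) qslot D (pi k1) * qslot D (pi k2) *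
     (K * E (tag (pi (later k1 k2)))) =
   \sum_(i < N) psel Nw D pi i * K * E (tag (pi i)).
  rewrite /psel.
  under [RHS]eq_bigr => i _ do (rewrite -mulrA mulr_suml; under eq_bigr => k1 _ do rewrite mulr_suml).
  rewrite [RHS]exchange_big /=; apply: eq_bigr => k1 _.
  rewrite [RHS]exchange_big /=; apply: eq_bigr => k2 _.
  rewrite (bigD1 (later k1 k2)) //= eqxx big1 ?addr0; first by rewrite mulrA.
  by move=> i /negbTE; rewrite eq_sym => ->; rewrite !mul0r.
under eq_bigr do under eq_bigr do rewrite mulrDr.
under eq_bigr do rewrite big_split /=.
rewrite big_split /= F1 F2.
under [X in _ <= X]eq_bigr do rewrite mulrDl.
by rewrite big_split.
Qed.

Unset Implicit Arguments.

Theorem lemma3 (R : realType) (n : nat) (Nw : 'I_n -> nat) (D : 'I_n -> R)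
  (alpha beta : R) (P : probability R R) (lam S a : R)
  (w : 'I_n -> R) (pi : 'I_(totalN Nw) -> slot Nw) :
  (forall i : 'I_n, (0 < Nw i)%N) ->
  (forall i : 'I_n, 0 <= D i) -> \sum_(i < n) D i = 1 ->
  (forall i : 'I_n, (Nw i)%:R / (alpha * (totalN Nw)%:R) <= D i
             /\ D i <= beta * (Nw i)%:R / (totalN Nw)%:R) ->
  P [set x : R | x < 0]%classic = 0%E ->
  (\int[P]_x (x%:E) = 1)%E ->
  0 < lam ->
  P.-integrable setT (fun x => (expR (lam * x))%:E) ->
  1 <= S ->
  (forall z : R, `|z| < lam / 2 -> derive1n 2 (mgf P) z <= 2 * S) ->
  0 < a -> a < lam / 2 ->
  (forall i : 'I_n, 0 <= w i) ->
  bijective pi ->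
  (forall k l : 'I_(totalN Nw), (k <= l)%N -> xs Nw w pi l <= xs Nw w pi k) ->
  (exp_change Nw D P a w pi <=
   (\sum_(i < totalN Nw)
      (psel Nw D pi i * (a + S * a ^+ 2)
       - (a / (totalN Nw)%:R - S * a ^+ 2 / ((totalN Nw)%:R ^+ 2)))
      * expR (a * xs Nw w pi i))%:E)%E.
Proof.
move=> Npos D0 D1 _ h0 h1 l0 il S1 hd a0 al w0 bij _.
pose E := fun j => expR (a * slot_val Nw w j).
have ddle : forall (b : 'I_n) (k : 'I_(totalN Nw)),
    a * (((tag (pi k) == b)%:R / (Nw (tag (pi k)))%:R - 1 / (totalN Nw)%:R)) <= lam / 2.
  move=> b k.
  have N0 : (0 < totalN Nw)%N by exact: (leq_ltn_trans (leq0n _) (ltn_ord k)).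
  have vN0 : 0 <= 1 / (totalN Nw)%:R :> R by rewrite divr_ge0.
  have u1 : (tag (pi k) == b)%:R / (Nw (tag (pi k)))%:R <= 1 :> R.
    rewrite ler_pdivrMr ?mul1r ?ltr0n //.
    by case: (_ == _); rewrite ?ler1n ?ler0n.
  apply: le_trans (ltW al); nra.
have hint : forall k1 k2 : 'I_(totalN Nw),
   (\int[P]_ww (Phi a (xs Nw (add_load w (tag (pi (later k1 k2))) ww) pi)
                 - Phi a (xs Nw w pi))%:E =
   (\sum_(k < totalN Nw) E (tag (pi k)) *
      (Fk P 0 (a * (((tag (pi k) == tag (pi (later k1 k2)))%:R / (Nw (tag (pi k)))%:R
                - 1 / (totalN Nw)%:R))) - 1))%:E)%E.
  move=> k1 k2.
  rewrite (eq_integral (fun ww => (\sum_(k < totalN Nw) E (tag (pi k)) *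
    (expR (a * (((tag (pi k) == tag (pi (later k1 k2)))%:R / (Nw (tag (pi k)))%:R
                - 1 / (totalN Nw)%:R)) * ww) - 1))%:E)); last first.
    by move=> ww _; rewrite phi_diff.
  exact: (@intchange R P lam (totalN Nw) (fun k => E (tag (pi k))) _ h0 l0 il (ddle _)).
rewrite /exp_change.
under eq_bigr => k1 _ do under eq_bigr => k2 _ do rewrite hint -EFinM.
under eq_bigr => k1 _ do rewrite sumEFin.
rewrite sumEFin lee_fin.
have Fb : forall d, - a <= d -> d <= a -> Fk P 0 d - 1 <= d + S * d ^+ 2.
  move=> d d1 d2.
  have := @taylor R P lam S a d h0 h1 l0 il hd al d1 d2.
  lra.
exact: (@alg R n Nw D pi a S E (Fk P 0) Npos D0 D1 bij a0 (le_trans ler01 S1) (fun j => expR_ge0 _) Fb).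
Qed.
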